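(* Let $G$ be a Chevalley–Demazure group scheme with root system $\Phi\in\{E_6,E_7,E_8,F_4\}$ and $R$ a commutative integral domain with $R^*\neq\{1\}$. Let $\alpha,\beta\in\Phi$ be linearly independent. Then there is a torus witness for $(\alpha,\beta)$, except possibly when $R^*=\{\pm1\}$, $\Phi=F_4$, and $\alpha,\beta$ are orthogonal and both long.
   Context: $T$ is the distinguished maximal torus of $G$. A torus witness for $(\alpha,\beta)$ is an element $s\in T(R)$ that centralizes the root subgroup $U_\alpha$ and satisfies $\mathrm{C}_{U_\beta}(s)=1$. *)

(* Defs.v *)
(* Combinatorial model of the distinguished maximal torus T
   of a Chevalley-Demazure group scheme acting on its root subgroups. *)
From HB Require Import structures.
From mathcomp Require Import all_boot all_order all_algebra.
Set Implicit Arguments. Unset Strict Implicit. Unset Printing Implicit Defensive.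
Import Order.TTheory GRing.Theory Num.Theory.
Local Open Scope ring_scope.

Inductive exc_type := E6 | E7 | E8 | F4.

Definition rk (P : exc_type) : nat :=
  match P with E6 => 6 | E7 => 7 | E8 => 8 | F4 => 4 end.

(* Gram matrices of the simple roots (Bourbaki labelling, 0-indexed).
   E_n : 1-3-4-5-6-7-8 with 2 attached to 4; all roots of norm 2.
   F4  : a1 - a2 => a3 - a4, a1,a2 long (norm 4), a3,a4 short (norm 2). *)
Definition gramE (i j : nat) : int :=
  if i == j then 2 else
  if [|| (i, j) \in [:: (0,2); (1,3); (2,3); (3,4); (4,5); (5,6); (6,7)]%N
       | (j, i) \in [:: (0,2); (1,3); (2,3); (3,4); (4,5); (5,6); (6,7)]%N]
  then -1 else 0.

Definition gramF (i j : nat) : int :=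
  match i, j return int with
  | 0, 0 => 4%:Z | 1, 1 => 4%:Z | 2, 2 => 2%:Z | 3, 3 => 2%:Z
  | 0, 1 => - 2%:Z | 1, 0 => - 2%:Z
  | 1, 2 => - 2%:Z | 2, 1 => - 2%:Z
  | 2, 3 => - 1%:Z | 3, 2 => - 1%:Z
  | _, _ => 0%:Z
  end%N.

Definition gram (P : exc_type) : 'M[rat]_(rk P) :=
  \matrix_(i, j) (if P is F4 then gramF i j else gramE i j)%:~R.

(* Vectors are written in coordinates with respect to the simple roots. *)
Definition form (P : exc_type) (u v : 'rV[rat]_(rk P)) : rat :=
  (u *m gram P *m v^T) 0 0.

Definition simple_root (P : exc_type) (i : 'I_(rk P)) : 'rV[rat]_(rk P) :=
  delta_mx 0 i.

Definition copair (P : exc_type) (v a : 'rV[rat]_(rk P)) : rat :=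
  2 * form v a / form a a.

Definition simple_refl (P : exc_type) (i : 'I_(rk P)) (v : 'rV[rat]_(rk P)) :=
  v - copair v (simple_root i) *: simple_root i.

(* The root system Phi = W . Delta : orbit of the simple roots under the
   group generated by the simple reflections. *)
Inductive is_root (P : exc_type) : 'rV[rat]_(rk P) -> Prop :=
  | root_simple i : is_root (simple_root i)
  | root_refl i v : is_root v -> is_root (simple_refl i v).

Definition is_long (P : exc_type) (a : 'rV[rat]_(rk P)) : Prop :=
  forall g : 'rV[rat]_(rk P), is_root g -> form g g <= form a a.

Definition roots_orthogonal (P : exc_type) (a b : 'rV[rat]_(rk P)) : Prop :=
  form a b = 0.

Definition lin_indep (n : nat) (a b : 'rV[rat]_n) : Prop :=
  forall x y : rat, x *: a + y *: b = 0 -> x = 0 /\ y = 0.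

Definition in_weight_lattice (P : exc_type) (l : 'rV[rat]_(rk P)) : Prop :=
  forall a, is_root a -> copair l a \is a Num.int.

(* The character lattice Lambda of the torus of G: a subgroup with
   Q(Phi) <= Lambda <= P(Phi).  (Phi, Lambda) determines G up to iso. *)
Definition admissible_lattice (P : exc_type) (L : 'rV[rat]_(rk P) -> Prop) : Prop :=
  [/\ L 0, (forall x y, L x -> L y -> L (x - y)),
      (forall a, is_root a -> L a) & (forall x, L x -> in_weight_lattice x)].

(* T(R) = Hom(Lambda, units of R) : elements of the split maximal torus. *)
Definition torus_elt (P : exc_type) (L : 'rV[rat]_(rk P) -> Prop)
    (R : comUnitRingType) (s : 'rV[rat]_(rk P) -> R) : Prop :=
  (forall x, L x -> s x \is a GRing.unit) /\
  (forall x y, L x -> L y -> s (x + y) = s x * s y).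

(* Conjugation action of s on U_a = { x_a(t) | t in R } :
   s x_a(t) s^-1 = x_a(a(s) t), where a(s) = s a.  We record the parameter. *)
Definition torus_act (P : exc_type) (R : comUnitRingType)
    (s : 'rV[rat]_(rk P) -> R) (a : 'rV[rat]_(rk P)) (t : R) : R := s a * t.

(* s centralizes U_a  (x_a is injective) *)
Definition centralizes_root_subgroup (P : exc_type) (R : comUnitRingType)
    (s : 'rV[rat]_(rk P) -> R) (a : 'rV[rat]_(rk P)) : Prop :=
  forall t, torus_act s a t = t.

(* C_{U_b}(s) = 1 : the only x_b(t) fixed by s is x_b(0) = 1 *)
Definition trivial_centralizer_in (P : exc_type) (R : comUnitRingType)
    (s : 'rV[rat]_(rk P) -> R) (b : 'rV[rat]_(rk P)) : Prop :=
  forall t, torus_act s b t = t -> t = 0.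

Definition torus_witness (P : exc_type) (L : 'rV[rat]_(rk P) -> Prop)
    (R : comUnitRingType) (s : 'rV[rat]_(rk P) -> R) (a b : 'rV[rat]_(rk P)) : Prop :=
  [/\ torus_elt L s, centralizes_root_subgroup s a & trivial_centralizer_in s b].

(* Main.v *)
Require Import Defs.
From HB Require Import structures.
From mathcomp Require Import all_boot all_order all_algebra.
Import Order.TTheory GRing.Theory Num.Theory.
Local Open Scope ring_scope.
Set Implicit Arguments. Unset Strict Implicit.

Definition sumi (n : nat) (F : nat -> int) : int :=
  foldr (fun i acc => F i + acc) 0 (iota 0 n).

Lemma sumiE n F : sumi n F = \sum_(i < n) F i.
Proof.
rewrite /sumi -(big_mkord xpredT F) /index_iota subn0.
elim: (iota 0 n) => [|x s IH]; first by rewrite big_nil.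
by rewrite big_cons /= IH.
Qed.

Definition g (P : exc_type) (i j : nat) : int :=
  if P is F4 then gramF i j else gramE i j.

Definition mk (P : exc_type) (F : nat -> int) : seq int :=
  [seq F j | j <- iota 0 (rk P)].

Lemma nth_mk P F j : (j < rk P)%N -> nth 0 (mk P F) j = F j.
Proof. by move=> hj; rewrite /mk (nth_map 0%N) ?size_iota // nth_iota. Qed.

Definition vec P (l : seq int) : 'rV[rat]_(rk P) := \row_j (nth 0 l j)%:~R.

Lemma all_all2 (f : nat -> nat -> bool) n i j :
  all (fun i => all (f i) (iota 0 n)) (iota 0 n) -> (i < n)%N -> (j < n)%N -> f i j.
Proof.
move=> /allP H hi hj.
have Hi : i \in iota 0 n by rewrite mem_iota.
have Hj : j \in iota 0 n by rewrite mem_iota.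
exact: (allP (H i Hi) j Hj).
Qed.
Definition tabE := Eval vm_compute in [seq [seq gramE i j | j <- iota 0 8] | i <- iota 0 8].
Definition tabF := Eval vm_compute in [seq [seq gramF i j | j <- iota 0 4] | i <- iota 0 4].
Definition gf P i j := nth 0 (nth [::] (if P is F4 then tabF else tabE) i) j.
Lemma gfE P i j : (i < rk P)%N -> (j < rk P)%N -> gf P i j = g P i j.
Proof.
have hE : all (fun i => all (fun j => gf E8 i j == g E8 i j) (iota 0 8)) (iota 0 8).
  by vm_compute.
have hF : all (fun i => all (fun j => gf F4 i j == g F4 i j) (iota 0 4)) (iota 0 4).
  by vm_compute.
have hE' : (i < 8)%N -> (j < 8)%N -> gf E8 i j = g E8 i j.
  by move=> hi hj; apply/eqP; apply: (all_all2 hE).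
have hF' : (i < 4)%N -> (j < 4)%N -> gf F4 i j = g F4 i j.
  by move=> hi hj; apply/eqP; apply: (all_all2 hF).
case: P => /= hi hj; [apply: hE'; exact: (leq_trans _ (isT : (6 <= 8)%N))
  | apply: hE'; exact: (leq_trans _ (isT : (7 <= 8)%N)) | exact: hE' | exact: hF'].
Qed.
Definition glist P (l : seq int) := mk P (fun j => sumi (rk P) (fun i => nth 0 l i * gf P i j)).
Definition dotg P (x y : seq int) := sumi (rk P) (fun j => nth 0 x j * nth 0 y j).
Definition dot P l m := dotg P (glist P l) m.

Lemma form_vec P l m : Defs.form (vec P l) (vec P m) = (dot P l m)%:~R.
Proof.
rewrite /Defs.form /dot /dotg sumiE !mxE rmorph_sum /=.
apply: eq_bigr => j _.
rewrite !mxE /glist nth_mk // sumiE intrM rmorph_sum /=.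
congr (_ * _).
apply: eq_bigr => i _; rewrite !mxE intrM gfE //.
Qed.

Definition srl P (i : nat) := mk P (fun j => ((j == i) : nat)%:Z).
Definition coli P l i := sumi (rk P) (fun k => nth 0 l k * gf P k i).
Definition coef P i l := divz (2 * coli P l i) (gf P i i).
Definition exact P i l :=
  (gf P i i != 0) && (coef P i l * gf P i i == 2 * coli P l i).
Definition irefl P i l := mk P (fun j => nth 0 l j - (if j == i then coef P i l else 0)).
Definition neg P l := mk P (fun j => - nth 0 l j).

Lemma dot_srl P l i : (i < rk P)%N -> dot P l (srl P i) = coli P l i.
Proof.
move=> hi; rewrite /dot /dotg sumiE (bigD1 (Ordinal hi)) //= big1 ?addr0.
  by rewrite /glist !nth_mk // eqxx mulr1.
move=> j /negbTE hj; rewrite [nth 0 (srl P i) j]nth_mk //.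
by rewrite (_ : (j == i :> nat) = false) ?mulr0 //; apply: contraFF hj => /eqP h; apply/eqP/val_inj.
Qed.

Lemma coli_srl P i : (i < rk P)%N -> coli P (srl P i) i = gf P i i.
Proof.
move=> hi; rewrite /coli sumiE (bigD1 (Ordinal hi)) //= big1 ?addr0.
  by rewrite nth_mk // eqxx mul1r.
move=> j /negbTE hj; rewrite nth_mk //.
by rewrite (_ : (j == i :> nat) = false) ?mul0r //; apply: contraFF hj => /eqP h; apply/eqP/val_inj.
Qed.

Lemma vec_srl P (i : 'I_(rk P)) : vec P (srl P i) = simple_root i.
Proof.
apply/rowP => j; rewrite /simple_root !mxE nth_mk //=.
Qed.

Lemma vec_neg P l : vec P (neg P l) = - vec P l.
Proof. by apply/rowP => j; rewrite !mxE nth_mk // intrN. Qed.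

Lemma refl_vec P (i : 'I_(rk P)) l : exact P i l ->
  simple_refl i (vec P l) = vec P (irefl P i l).
Proof.
case/andP => hd /eqP he.
have hc : copair (vec P l) (simple_root i) = (coef P i l)%:~R.
  rewrite /copair -vec_srl !form_vec !dot_srl // coli_srl //.
  rewrite -[2]/(2%:~R : rat) -intrM -he intrM mulfK //.
  by rewrite intr_eq0.
rewrite /simple_refl hc -vec_srl; apply/rowP => j.
rewrite !mxE /irefl !nth_mk //; case: (j == i :> nat) => /=.
  by rewrite intrB mulr1.
by rewrite mulr0 subr0 subr0.
Qed.

Definition isF4 P := if P is F4 then true else false.

Fixpoint bfs P (k : nat) (S F : seq (seq int)) : seq (seq int) :=
  if k is k'.+1 then
    let N := flatten [seq [seq irefl P i l | i <- iota 0 (rk P) & exact P i l] | l <- F] in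
    let N' := [seq x <- undup N | x \notin S] in
    if N' is [::] then S else bfs P k' (S ++ N') N'
  else S.

Definition simples P := [seq srl P i | i <- iota 0 (rk P)].
Definition RL P := bfs P 200 (simples P) (simples P).

Definition chk3' P RLs := all (fun l => dot P l l <= 4) RLs.
Definition Tof P RLs := [seq (l, glist P l, dot P l l) | l <- RLs].
Fixpoint hasL (T : Type) (a : T -> bool) (s : seq T) : bool :=
  if s is x :: s' then (if a x then true else hasL a s') else false.
Lemma hasLE (T : Type) (a : T -> bool) s : hasL a s = has a s.
Proof. by elim: s => //= x s <-; case: (a x). Qed.
Definition goodc P (gl gm : seq int) (r : seq int * seq int * int) :=
  let: (c, gc, nc) := r in
  if dotg P gl c == 0 then
    if nc == 0 then false else
    let v := 2 * dotg P gm c in if v == nc then true else v == - nc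
  else false.
Definition pairok P (T : seq (seq int * seq int * int)) (p q : seq int * seq int * int) :=
  let: (l, gl, nl) := p in let: (m, gm, nm) := q in
  if m == l then true else if m == neg P l then true else
  if [&& isF4 P, dotg P gl m == 0, nl == 4 & nm == 4] then true else
  hasL (goodc P gl gm) T.

Definition mkpar P (RLs : seq (seq int)) : seq (nat * nat) :=
  [seq (let l := nth [::] RLs k in
        let si := find (fun i => srl P i == l) (iota 0 (rk P)) in
        if (si < rk P)%N then (k, si) else
        let ok k' i := exact P i (nth [::] RLs k') && (irefl P i (nth [::] RLs k') == l) in
        let kk := find (fun k' => has (ok k') (iota 0 (rk P))) (iota 0 k) in
        (kk, find (ok kk) (iota 0 (rk P)))) | k <- iota 0 (size RLs)].

Definition chkpar P (RLs : seq (seq int)) (par : seq (nat * nat)) :=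
  all (fun k => let: (k', i) := nth (0, 0)%N par k in
        (i < rk P)%N &&
        (if k' == k then srl P i == nth [::] RLs k
         else [&& (k' < k)%N, exact P i (nth [::] RLs k') &
               irefl P i (nth [::] RLs k') == nth [::] RLs k]))
    (iota 0 (size RLs)).

Definition mkcl P (RLs : seq (seq int)) : seq (seq nat) :=
  [seq [seq index (irefl P i l) RLs | i <- iota 0 (rk P)] | l <- RLs].

Definition chkcl P (RLs : seq (seq int)) (cl : seq (seq nat)) :=
  all (fun i => srl P i \in RLs) (iota 0 (rk P)) &&
  all (fun k => let l := nth [::] RLs k in let c := nth [::] cl k in
         all (fun i => [&& exact P i l, (nth 0%N c i < size RLs)%N &
                           nth [::] RLs (nth 0%N c i) == irefl P i l]) (iota 0 (rk P)))
    (iota 0 (size RLs)).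

Definition chk2r P RLs := let T := Tof P RLs in
  all (fun j => all (pairok P T (srl P j, glist P (srl P j), dot P (srl P j) (srl P j))) T)
    (iota 0 (rk P)).

Definition allchk P RLs par cl :=
  [&& chkpar P RLs par, chkcl P RLs cl, chk2r P RLs & chk3' P RLs].

Lemma par_root P RLs par : chkpar P RLs par ->
  forall x, x \in RLs -> is_root (vec P x).
Proof.
move=> /allP H.
suff hk : forall k, (k < size RLs)%N -> is_root (vec P (nth [::] RLs k)).
  by move=> x hx; rewrite -(nth_index [::] hx); apply: hk; rewrite index_mem.
elim/ltn_ind => k IH hk.
have := H k; rewrite mem_iota /= => /(_ hk).
case: (nth (0, 0)%N par k) => k' i /andP [hi].
case: eqP => [_ /eqP <- | _ /and3P [hkk he /eqP <-]].
  by rewrite (vec_srl (Ordinal hi)); constructor.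
rewrite -(refl_vec (i := Ordinal hi)) //; constructor.
by apply: IH => //; apply: ltn_trans hkk hk.
Qed.

Lemma cl_RL P RLs cl (c1 : chkcl P RLs cl) v : is_root v -> exists2 l, l \in RLs & v = vec P l.
Proof.
case/andP: c1 => /allP hs /allP hr.
elim=> [i | i w _ [l hl ->]].
  exists (srl P i); first by apply: hs; rewrite mem_iota /=.
  by rewrite vec_srl.
have hk : index l RLs \in iota 0 (size RLs) by rewrite mem_iota /= index_mem.
have hi : (i : nat) \in iota 0 (rk P) by rewrite mem_iota /=.
have := allP (hr _ hk) i hi; rewrite nth_index // => /and3P [he hb /eqP hq].
exists (irefl P i l); last by rewrite refl_vec.
by rewrite -hq mem_nth.
Qed.
Lemma formDl P (x y z : 'rV[rat]_(rk P)) : Defs.form (x + y) z = Defs.form x z + Defs.form y z.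
Proof. by rewrite /Defs.form !mulmxDl mxE. Qed.

Lemma copairDl P (x y z : 'rV[rat]_(rk P)) : copair (x + y) z = copair x z + copair y z.
Proof. by rewrite /copair formDl mulrDr mulrDl. Qed.

Lemma witness_of P (L : 'rV[rat]_(rk P) -> Prop) (hL : admissible_lattice L)
  (R : idomainType) (u : R) (hu : u \is a GRing.unit) (gv a b : 'rV[rat]_(rk P))
  (hg : is_root gv) (ha : copair a gv = 0) (hb : u ^ Num.floor (copair b gv) != 1) :
  exists s : 'rV[rat]_(rk P) -> R, torus_witness L s a b.
Proof.
case: hL => _ _ _ hw.
exists (fun x => u ^ Num.floor (copair x gv)); split.
- split=> [x _|x y hx hy]; first exact: unitrXz.
  have ix := hw x hx gv hg; have iy := hw y hy gv hg.
  have -> : Num.floor (copair (x + y) gv) = Num.floor (copair x gv) + Num.floor (copair y gv).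
    apply: (@intr_inj rat); rewrite intrD !floorK //; last by rewrite copairDl rpredD.
    by rewrite copairDl.
  by rewrite exprzDr.
- by move=> t; rewrite /torus_act ha -[0]/(0%:~R : rat) intrKfloor expr0z mul1r.
- move=> t; rewrite /torus_act => /eqP; rewrite -subr_eq0 -{2}[t]mul1r -mulrBl mulf_eq0.
  by rewrite subr_eq0 (negbTE hb) => /eqP.
Qed.

From Stdlib Require Import Classical.


From mathcomp Require Import ring.

Lemma gsym_tab : [&& all (fun i => all (fun j => gf E8 i j == gf E8 j i) (iota 0 8)) (iota 0 8),
   all (fun i => all (fun j => gf F4 i j == gf F4 j i) (iota 0 4)) (iota 0 4),
   all (fun i => gf E8 i i != 0) (iota 0 8) & all (fun i => gf F4 i i != 0) (iota 0 4)].
Proof. by vm_compute. Qed.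

Lemma gsym P i j : (i < rk P)%N -> (j < rk P)%N -> g P i j = g P j i.
Proof.
move=> hi hj; rewrite -!gfE //.
case/and4P: gsym_tab => hE hF _ _.
case: P hi hj => /= hi hj; apply/eqP.
- exact: (all_all2 hE (leq_trans hi (isT : (6 <= 8)%N)) (leq_trans hj (isT : (6 <= 8)%N))).
- exact: (all_all2 hE (leq_trans hi (isT : (7 <= 8)%N)) (leq_trans hj (isT : (7 <= 8)%N))).
- exact: (all_all2 hE).
- exact: (all_all2 hF).
Qed.

Lemma gdiag P i : (i < rk P)%N -> g P i i != 0.
Proof.
move=> hi; rewrite -gfE //.
case/and4P: gsym_tab => _ _ /allP hE /allP hF.
case: P hi => /= hi.
- by apply: (hE i); rewrite mem_iota /= (leq_trans hi (isT : (6 <= 8)%N)).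
- by apply: (hE i); rewrite mem_iota /= (leq_trans hi (isT : (7 <= 8)%N)).
- by apply: hE; rewrite mem_iota.
- by apply: hF; rewrite mem_iota.
Qed.

Lemma gram_sym P : (gram P)^T = gram P.
Proof.
apply/matrixP => i j; rewrite !mxE.
change ((g P j i)%:~R = (g P i j)%:~R :> rat).
by rewrite (gsym (ltn_ord j) (ltn_ord i)).
Qed.

Lemma form_sym P (x y : 'rV[rat]_(rk P)) : Defs.form x y = Defs.form y x.
Proof.
rewrite /Defs.form -[in RHS](trmxK (y *m gram P *m x^T)) [in RHS]mxE.
by rewrite !trmx_mul trmxK gram_sym mulmxA.
Qed.

Lemma formBl P (x y z : 'rV[rat]_(rk P)) : Defs.form (x - y) z = Defs.form x z - Defs.form y z.
Proof. by rewrite /Defs.form !mulmxBl !mxE. Qed.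
Lemma formZl P k (x z : 'rV[rat]_(rk P)) : Defs.form (k *: x) z = k * Defs.form x z.
Proof. by rewrite /Defs.form -!scalemxAl !mxE. Qed.
Lemma formBr P (x y z : 'rV[rat]_(rk P)) : Defs.form z (x - y) = Defs.form z x - Defs.form z y.
Proof. by rewrite !(form_sym z) formBl. Qed.
Lemma formZr P k (x z : 'rV[rat]_(rk P)) : Defs.form z (k *: x) = k * Defs.form z x.
Proof. by rewrite !(form_sym z) formZl. Qed.
Lemma copairZl P k (x z : 'rV[rat]_(rk P)) : copair (k *: x) z = k * copair x z.
Proof. by rewrite /copair formZl mulrCA !mulrA. Qed.

Lemma simple_nz P (i : 'I_(rk P)) : Defs.form (simple_root i) (simple_root i) != 0.
Proof.
rewrite -vec_srl form_vec dot_srl // coli_srl // intr_eq0 gfE //; exact: gdiag.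
Qed.

Section Refl.
Variables (P : exc_type) (i : 'I_(rk P)).
Local Notation sr := (@simple_refl P i).
Local Notation al := (simple_root i).

Lemma sr_form x y : Defs.form (sr x) (sr y) = Defs.form x y.
Proof.
have hA := simple_nz i.
rewrite /simple_refl !formBl !formBr !formZl !formZr (form_sym al y) /copair.
by field.
Qed.

Lemma sr_copair_al x : copair (sr x) al = - copair x al.
Proof.
have hA := simple_nz i.
by rewrite /simple_refl /copair formBl formZl /copair; field.
Qed.

Lemma srK x : sr (sr x) = x.
Proof.
rewrite {1}/simple_refl sr_copair_al /simple_refl scaleNr opprK.
by rewrite subrK.
Qed.

Lemma sr_lin (k1 k2 : rat) x y : sr (k1 *: x + k2 *: y) = k1 *: sr x + k2 *: sr y.
Proof.
rewrite /simple_refl copairDl !copairZl scalerDl !scalerBr !scalerA.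
rewrite opprD addrACA //.
Qed.

Lemma sr0 : sr 0 = 0.
Proof.
have h : copair (0 : 'rV[rat]_(rk P)) al = 0.
  by rewrite /copair (_ : Defs.form 0 al = 0) ?mulr0 ?mul0r // -(scale0r 0) formZl mul0r.
by rewrite /simple_refl h scale0r subr0.
Qed.
End Refl.

Lemma L_closed P (L : 'rV[rat]_(rk P) -> Prop) (hL : admissible_lattice L) :
  [/\ forall y, L y -> L (- y), forall x y, L x -> L y -> L (x + y) &
      forall v, L v -> forall z : int, L (z%:~R *: v)].
Proof.
case: hL => h0 hB _ _.
have hN : forall y, L y -> L (- y) by move=> y hy; rewrite -sub0r; apply: hB.
have hD : forall x y, L x -> L y -> L (x + y).
  by move=> x y hx hy; rewrite -[y]opprK; apply: hB => //; apply: hN.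
split=> // v hv.
have hP : forall n : nat, L ((n%:Z)%:~R *: v).
  elim=> [|n IH]; first by rewrite scale0r.
  by rewrite -[n.+1]addn1 PoszD intrD scalerDl scale1r; apply: hD.
case=> [n|n]; first exact: hP.
by rewrite NegzE intrN scaleNr; apply: hN.
Qed.

Lemma L_sr P (L : 'rV[rat]_(rk P) -> Prop) (hL : admissible_lattice L) (i : 'I_(rk P)) x :
  L x -> L (simple_refl i x).
Proof.
move=> hx; have [hN hD hZ] := L_closed hL.
case: hL => _ hB hr hw.
have hint : copair x (simple_root i) \is a Num.int by apply: hw => //; constructor.
rewrite /simple_refl -(floorK hint); apply: hB => //; apply: hZ; apply: hr; constructor.
Qed.

Lemma transport P (L : 'rV[rat]_(rk P) -> Prop) (hL : admissible_lattice L)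
  (R : idomainType) (s : 'rV[rat]_(rk P) -> R) (i : 'I_(rk P)) a b :
  torus_witness L s (simple_refl i a) (simple_refl i b) ->
  torus_witness L (fun x => s (simple_refl i x)) a b.
Proof.
case=> [[hu hm] hc ht]; split.
- split=> [x hx | x y hx hy]; first by apply: hu; apply: L_sr.
  have -> : simple_refl i (x + y) = simple_refl i x + simple_refl i y.
    by have := sr_lin i 1 1 x y; rewrite !scale1r.
  by apply: hm; apply: L_sr.
- exact: hc.
- exact: ht.
Qed.

From Stdlib Require Import Classical.

Definition exc P (R : idomainType) (a b : 'rV[rat]_(rk P)) :=
  [/\ (forall u : R, u \is a GRing.unit -> u = 1 \/ u = -1),
        P = F4, roots_orthogonal a b, is_long a & is_long b].

Lemma main_ind P (L : 'rV[rat]_(rk P) -> Prop) (hL : admissible_lattice L) (R : idomainType)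
  (base : forall (j : 'I_(rk P)) b, is_root b -> lin_indep (simple_root j) b ->
      ~ exc R (simple_root j) b -> exists s : 'rV[rat]_(rk P) -> R, torus_witness L s (simple_root j) b) :
  forall a, is_root a -> forall b, is_root b -> lin_indep a b -> ~ exc R a b ->
    exists s : 'rV[rat]_(rk P) -> R, torus_witness L s a b.
Proof.
move=> a; elim => [j | i a' ha' IH] b hb hab hn; first exact: base.
have hab' : lin_indep a' (simple_refl i b).
  move=> x y h; apply: hab.
  by rewrite -[b](srK i) -sr_lin h sr0.
have hn' : ~ exc R a' (simple_refl i b).
  case=> hu hP ho hla hlb; apply: hn; split => //.
  - by rewrite /roots_orthogonal -[b](srK i) sr_form.
  - by move=> g' hg'; rewrite sr_form; apply: hla.
  - by move=> g' hg'; rewrite -[b](srK i) sr_form; apply: hlb.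
have [s hs] := IH _ (root_refl i hb) hab' hn'.
exists (fun x => s (simple_refl i x)); apply: transport => //.
by rewrite srK.
Qed.

Lemma main_gen P RLs (hRL : forall v, is_root v -> exists2 l, l \in RLs & v = vec P l)
    (c3 : chk3' P RLs)
    (hroot : forall x, x \in RLs -> is_root (vec P x))
    (L : 'rV[rat]_(rk P) -> Prop)
    (hL : admissible_lattice L) (R : idomainType)
    (hR : exists u : R, u \is a GRing.unit /\ u <> 1)
    la lb (hb : is_root (vec P lb))
    (hab : lin_indep (vec P la) (vec P lb))
    (hp : pairok P (Tof P RLs) (la, glist P la, dot P la la) (lb, glist P lb, dot P lb lb)) :
  ~ exc R (vec P la) (vec P lb) ->
  exists s : 'rV[rat]_(rk P) -> R, torus_witness L s (vec P la) (vec P lb).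
Proof.
move=> hnot.
rewrite /pairok in hp.
move: hp; case: ifP => [/eqP E _ | _].
  subst lb; have := hab 1 (-1); rewrite scale1r scaleN1r subrr => /(_ erefl) [h _].
  by move: (@oner_neq0 rat); rewrite h eqxx.
case: ifP => [/eqP E _ | _].
  subst lb; have := hab 1 1; rewrite vec_neg !scale1r subrr => /(_ erefl) [h _].
  by move: (@oner_neq0 rat); rewrite h eqxx.
case: ifP => [/and4P [hF /eqP h0 /eqP h4a /eqP h4b] _ | _ hg].
  have hPF : P = F4 by case: (P) hF.
  case: (classic (forall u : R, u \is a GRing.unit -> u = 1 \/ u = -1)) => [Hall | Hn].
    exfalso; apply: hnot; split => //.
    - by rewrite /roots_orthogonal form_vec; move: h0; rewrite /dot => ->.
    - move=> g' hg'; case: (hRL _ hg') => lg hlg ->.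
      rewrite !form_vec; move: h4a; rewrite /dot => ->.
      by rewrite ler_int; exact: (allP c3).
    - move=> g' hg'; case: (hRL _ hg') => lg hlg ->.
      rewrite !form_vec; move: h4b; rewrite /dot => ->.
      by rewrite ler_int; exact: (allP c3).
  have [v Hv] := not_all_ex_not _ _ Hn.
  have [hv hv1] := imply_to_and _ _ Hv.
  apply: (witness_of hL hv hb).
    by rewrite /copair form_vec; move: h0; rewrite /dot => ->; rewrite mulr0 mul0r.
  have -> : copair (vec P lb) (vec P lb) = 2%:~R.
    rewrite /copair form_vec; move: h4b; rewrite /dot => ->.
    by rewrite mulfK // intr_eq0.
  rewrite intrKfloor; apply/negP; rewrite -[v ^ 2]/(v ^+ 2) sqrf_eq1 => /orP [] /eqP h.
    by apply: hv1; left.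
  by apply: hv1; right.
move: hg; rewrite hasLE /Tof => /hasP [r /mapP [c hc ->]].
rewrite /goodc; case: ifP => // /eqP h0; case: ifP => // /negbT hn0 hv.
case: hR => u [hu hu1].
apply: (witness_of hL hu (hroot _ hc)).
  by rewrite /copair form_vec; move: h0; rewrite /dot => ->; rewrite mulr0 mul0r.
have hcp : copair (vec P lb) (vec P c) = 1 \/ copair (vec P lb) (vec P c) = -1.
  rewrite /copair !form_vec -[2]/(2%:~R : rat) -intrM.
  move: hv; case: ifP => [/eqP -> _ | _ /eqP ->]; [left | right].
    by rewrite divff // intr_eq0.
  by rewrite intrN mulNr divff // intr_eq0.
case: hcp => ->.
  rewrite -[1]/(1%:~R : rat) intrKfloor expr1z; exact/eqP.
rewrite -[-1]/((-1)%:~R : rat) intrKfloor exprN1 invr_eq1; exact/eqP.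
Qed.



Lemma final_gen P RLs par cl (c : allchk P RLs par cl)
    (L : 'rV[rat]_(rk P) -> Prop) (hL : admissible_lattice L) (R : idomainType)
    (hR : exists u : R, u \is a GRing.unit /\ u <> 1)
    (a b : 'rV[rat]_(rk P)) (ha : is_root a) (hb : is_root b)
    (hab : lin_indep a b) :
  ~ exc R a b -> exists s : 'rV[rat]_(rk P) -> R, torus_witness L s a b.
Proof.
case/and4P: c => cp ccl c2 c3.
have hroot := par_root cp; have hRL := cl_RL ccl.
move=> hn; apply: (main_ind hL _ ha hb hab hn) => j b' hb' hab' hn'.
have [lb hlb Eb] := hRL _ hb'; subst b'.
rewrite -vec_srl in hab' hn' *.
apply: (main_gen hRL c3 hroot hL hR) => //.
move: c2; rewrite /chk2r => /allP H.
have hj : (j : nat) \in iota 0 (rk P) by rewrite mem_iota /=.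
have Hb := map_f (fun l => (l, glist P l, dot P l l)) hlb.
exact: (allP (H _ hj) _ Hb).
Qed.

Definition RLE6 := Eval vm_compute in RL E6.
Definition RLE7 := Eval vm_compute in RL E7.
Definition RLE8 := Eval vm_compute in RL E8.
Definition RLF4 := Eval vm_compute in RL F4.
Definition parE6 := Eval vm_compute in mkpar E6 RLE6.
Definition parE7 := Eval vm_compute in mkpar E7 RLE7.
Definition parE8 := Eval vm_compute in mkpar E8 RLE8.
Definition parF4 := Eval vm_compute in mkpar F4 RLF4.
Definition clE6 := Eval vm_compute in mkcl E6 RLE6.
Definition clE7 := Eval vm_compute in mkcl E7 RLE7.
Definition clE8 := Eval vm_compute in mkcl E8 RLE8.
Definition clF4 := Eval vm_compute in mkcl F4 RLF4.

Lemma okE6 : allchk E6 RLE6 parE6 clE6. Proof. vm_compute. reflexivity. Qed.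
Lemma okE7 : allchk E7 RLE7 parE7 clE7. Proof. vm_compute. reflexivity. Qed.
Lemma okE8 : allchk E8 RLE8 parE8 clE8. Proof. vm_compute. reflexivity. Qed.
Lemma okF4 : allchk F4 RLF4 parF4 clF4. Proof. vm_compute. reflexivity. Qed.

Lemma key Q : exists RLs, exists par, exists cl, allchk Q RLs par cl.
Proof.
case: Q.
- by exists RLE6, parE6, clE6; exact: okE6.
- by exists RLE7, parE7, clE7; exact: okE7.
- by exists RLE8, parE8, clE8; exact: okE8.
- by exists RLF4, parF4, clF4; exact: okF4.
Qed.

Unset Implicit Arguments.

Theorem proposition6p4 (P : exc_type) (L : 'rV[rat]_(rk P) -> Prop)
    (hL : admissible_lattice L) (R : idomainType)
    (hR : exists u : R, u \is a GRing.unit /\ u <> 1)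
    (a b : 'rV[rat]_(rk P)) (ha : is_root a) (hb : is_root b)
    (hab : lin_indep a b) :
  ~ [/\ (forall u : R, u \is a GRing.unit -> u = 1 \/ u = -1),
        P = F4, roots_orthogonal a b, is_long a & is_long b] ->
  exists s : 'rV[rat]_(rk P) -> R, torus_witness L s a b.
Proof.
have [RLs [par [cl hc]]] := key P.
exact: (final_gen hc hL hR ha hb hab).
Qed.
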